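(* Let $\phi:\mathbb{R}\to\mathbb{R}\cup\{+\infty\}$ be a strictly convex, closed scalar function of Legendre type with Legendre conjugate $\psi(y)=\sup_\lambda(\lambda y-\phi(\lambda))$, and for vectors set $\phi(\mathbf{x})=\sum_m\phi(x_m)$, $\psi(\mathbf{y})=\sum_m\psi(y_m)$. Define $L_\phi(\mathbf{a},\mathbf{b})=\phi(\mathbf{a})+\psi(\mathbf{b})-\langle\mathbf{a},\mathbf{b}\rangle$ (equivalently $D_\phi(\mathbf{a},\nabla\psi(\mathbf{b}))$, the Bregman divergence of $\phi$), for vectors or scalars. Fix a user $i$ who has rated the set $\mathcal{V}_i$ of items, with ratings $R_{ij}\in[L]$ for $j\in\mathcal{V}_i$, and let $\hat{\mathbf{R}}_i=(\hat R_{ij})_{j\in\mathcal{V}_i}$ be any real vector of predictions. For $l\in[L]$ let $\Omega_{il}=|\{j\in\mathcal{V}_i: R_{ij}=l\}|$, assume $\Omega_{il}\ge 1$ for every $l$, and let $\bar{\hat R}_i^{\,l}=\frac{1}{\Omega_{il}}\sum_{j: R_{ij}=l}\hat R_{ij}$. For a rating-scale vector assign to each level $l$ a value $r_{il}$, and let $E_i\mathbf{r}_i\in\mathbb{R}^{|\mathcal{V}_i|}$ be the vector whose entry for item $j$ is $r_{i,R_{ij}}$. Then the set of minimizers of $L_\phi(E_i\mathbf{r}_i,\hat{\mathbf{R}}_i)$ over rating-scale vectors with $r_{i1}\le r_{i2}\le\cdots\le r_{iL}$ equals the set of minimizers of $\sum_{l=1}^L\Omega_{il}\,L_\phi\big(r_{il},\bar{\hat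 R}_i^{\,l}\big)$ over the same set of vectors.
   Context: In the paper the rating-scale vector lies in the set of vectors in $\mathbb{R}^L$ with components in non-increasing order, with rating level $l$ stored in component $L-l+1$ (one-hot encoding $e_{L-l+1}=1$ for rating $l$); in the statement above $r_{il}$ directly denotes the value assigned to rating level $l$, so this set corresponds to $r_{i1}\le\cdots\le r_{iL}$. *)

(* Defs.v *)
From HB Require Import structures.
From mathcomp Require Import all_boot all_order all_algebra.
From mathcomp Require Import all_classical all_reals all_analysis.
Set Implicit Arguments. Unset Strict Implicit. Unset Printing Implicit Defensive.
Import Order.TTheory GRing.Theory Num.Theory.
Import numFieldNormedType.Exports.
Local Open Scope classical_set_scope.
Local Open Scope ring_scope.

Section Legendre.
Variable R : realType.
Implicit Types (phi : R -> \bar R).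

Definition edom phi : set R := [set x | (phi x < +oo)%E].

Definition proper_fun phi : Prop :=
  (forall x, (-oo < phi x)%E) /\ (exists x, (phi x < +oo)%E).

Definition closed_fun phi : Prop :=
  forall a : R, closed [set x | (phi x <= a%:E)%E].

(* strictly convex (this also forces convexity of the effective domain) *)
Definition strictly_convex_fun phi : Prop :=
  forall x y t : R, x \in edom phi -> y \in edom phi -> x != y -> 0 < t < 1 ->
    (phi (t * x + (1 - t) * y)%R < t%:E * phi x + (1 - t)%R%:E * phi y)%E.

Definition convex_fun phi : Prop :=
  forall x y t : R, 0 <= t <= 1 ->
    (phi (t * x + (1 - t) * y)%R <= t%:E * phi x + (1 - t)%R%:E * phi y)%E.

(* essentially smooth (Rockafellar, Sec. 26), for a function on R:
   int dom phi nonempty, phi differentiable there, and |phi'(x_k)| -> +oo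
   whenever x_k in int dom phi converges to a boundary point of dom phi. *)
Definition essentially_smooth phi : Prop :=
  (exists x, (edom phi)° x) /\
  (forall x, (edom phi)° x -> derivable (fun z => fine (phi z)) x 1) /\
  (forall (b : R) (u : nat -> R),
     closure (edom phi) b -> ~ (edom phi)° b ->
     (forall k, (edom phi)° (u k)) -> u @ \oo --> b ->
     forall M : R, exists N : nat, forall k, (N <= k)%N ->
       M < `| derive1 (fun z => fine (phi z)) (u k) |).

(* essentially strictly convex; in dimension one, for an essentially smooth
   function this amounts to strict convexity on int dom phi *)
Definition essentially_strictly_convex phi : Prop :=
  forall x y t : R, (edom phi)° x -> (edom phi)° y -> x != y -> 0 < t < 1 ->
    (phi (t * x + (1 - t) * y)%R < t%:E * phi x + (1 - t)%R%:E * phi y)%E.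

Definition legendre phi : Prop :=
  proper_fun phi /\ closed_fun phi /\ convex_fun phi /\
  essentially_smooth phi /\ essentially_strictly_convex phi.

Definition conj_fun phi (y : R) : \bar R :=
  ereal_sup (range (fun l : R => ((l * y)%R%:E - phi l)%E)).

Definition Lphi phi (a b : R) : \bar R :=
  (phi a + conj_fun phi b - (a * b)%R%:E)%E.

Definition Lphi_vec phi (n : nat) (a b : 'I_n -> R) : \bar R :=
  ((\sum_(j < n) phi (a j)) + (\sum_(j < n) conj_fun phi (b j))
    - (\sum_(j < n) a j * b j)%R%:E)%E.

End Legendre.

Definition Omega_l (n L : nat) (Rt : 'I_n -> 'I_L) (l : 'I_L) : nat :=
  #|[set j | Rt j == l]|.

Definition avg_pred (R : realType) (n L : nat) (Rt : 'I_n -> 'I_L)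
  (Rhat : 'I_n -> R) (l : 'I_L) : R :=
  (Omega_l Rt l)%:R^-1 * \sum_(j < n | Rt j == l) Rhat j.

Definition Eexpand (R : realType) (n L : nat) (Rt : 'I_n -> 'I_L)
  (r : 'I_L -> R) : 'I_n -> R := fun j => r (Rt j).

Definition scale_vec (R : realType) (L : nat) (r : 'I_L -> R) : Prop :=
  forall l l' : 'I_L, (l <= l')%N -> r l <= r l'.

Definition argmin_set (T : Type) (R : realType) (S : set T) (f : T -> \bar R)
  : set T :=
  [set x | S x /\ forall y, S y -> (f x <= f y)%E].

(* Main.v *)
Require Import Defs.
From HB Require Import structures.
From mathcomp Require Import all_boot all_order all_algebra.
From mathcomp Require Import all_classical all_reals all_analysis.
From mathcomp Require Import ring lra.
Import Order.TTheory GRing.Theory Num.Theory.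
Local Open Scope classical_set_scope.
Local Open Scope ring_scope.

Section H.
Local Open Scope ereal_scope.
Variable R : realType.

Lemma argmin_shift (T : Type) (S : set T) (f g : T -> \bar R) (c : R) :
  (forall x, g x = f x + c%:E) -> argmin_set S f = argmin_set S g.
Proof.
move=> hg; apply/seteqP; split => x [Sx Hx]; split => // y Sy.
  by rewrite !hg leeD2rE //; exact: Hx.
by have := Hx y Sy; rewrite !hg leeD2rE.
Qed.

Lemma conj_gt (phi : R -> \bar R) y : proper_fun phi -> -oo < conj_fun phi y.
Proof.
move=> [hm [x hx]].
have fx : phi x \is a fin_num by rewrite fin_numE -ltNye -ltey hm hx.
apply: (@lt_le_trans _ _ ((x * y)%:E - phi x)).
  by rewrite -(fineK fx) -EFinB ltNyr.
by apply: ereal_sup_ubound; exists x.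
Qed.

Lemma sum_const_cond n L (Rt : 'I_n -> 'I_L) (l : 'I_L) (x : R) :
  (\sum_(j < n | Rt j == l) x)%R = (x * (Omega_l Rt l)%:R)%R.
Proof.
rewrite sumr_const /Omega_l mulr_natr; apply: f_equal.
apply: eq_card => j. rewrite /in_mem /= /in_set asboolb. done.
Qed.

Lemma conj_avg_bound (phi : R -> \bar R) n L (Rt : 'I_n -> 'I_L) (Rhat : 'I_n -> R) (M : R) l :
  proper_fun phi -> (1 <= Omega_l Rt l)%N -> (forall j, conj_fun phi (Rhat j) <= M%:E) ->
  conj_fun phi (avg_pred Rt Rhat l) <= M%:E.
Proof.
move=> hpr hO hM; apply: ge_ereal_sup => _ [lam _ <-].
case hp: (phi lam) => [c| |].
- rewrite -EFinB lee_fin.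
  have hj : forall j, (lam * Rhat j - c <= M)%R.
    move=> j; rewrite -lee_fin EFinB -hp.
    by apply: le_trans (hM j); apply: ereal_sup_ubound; exists lam.
  set O := (Omega_l Rt l)%:R : R.
  have O0 : (0 < O)%R by rewrite /O ltr0n.
  have -> : (lam * avg_pred Rt Rhat l - c =
     O^-1 * \sum_(j < n | Rt j == l) (lam * Rhat j - c))%R.
    rewrite sumrB sum_const_cond -mulr_sumr /avg_pred -/O.
    by field; rewrite gt_eqF.
  rewrite ler_pdivrMl // mulrC /O -sum_const_cond.
  by apply: ler_sum => j _; apply: hj.
- by rewrite (_ : _ - +oo = -oo) ?leNye.
- by have := hpr.1 lam; rewrite hp.
Qed.

Lemma sum_const_condV (V : nmodType) n L (Rt : 'I_n -> 'I_L) (l : 'I_L) (x : V) :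
  (\sum_(j < n | Rt j == l) x)%R = (x *+ (Omega_l Rt l))%R.
Proof.
rewrite sumr_const /Omega_l; apply: f_equal.
by apply: eq_card => j; rewrite /in_mem /= /in_set asboolb.
Qed.
End H.
Arguments conj_avg_bound {R phi n L Rt Rhat M l}.
Arguments conj_gt {R phi} y.
Arguments sum_const_condV {V n L Rt l} x.
Arguments argmin_shift {R T S f g} c.


Theorem lemma2 (R : realType) (phi : R -> \bar R) (n L : nat)
  (Rt : 'I_n -> 'I_L) (Rhat : 'I_n -> R) :
  strictly_convex_fun phi -> closed_fun phi -> legendre phi ->
  (forall l : 'I_L, (1 <= Omega_l Rt l)%N) ->
  (forall j : 'I_n, (conj_fun phi (Rhat j) < +oo)%E) ->
  argmin_set (@scale_vec R L)
    (fun r => Lphi_vec phi (Eexpand Rt r) Rhat)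
  = argmin_set (@scale_vec R L)
    (fun r => (\sum_(l < L) (Omega_l Rt l)%:R%:E
                 * Lphi phi (r l) (avg_pred Rt Rhat l))%E).
Proof.
move=> _ _ [hpr _] hO hfin.
set psi := conj_fun phi.
have fj : forall j, psi (Rhat j) \is a fin_num.
  by move=> j; rewrite fin_numE -ltNye -ltey conj_gt // hfin.
set M := (\sum_j `|fine (psi (Rhat j))|)%R.
have hM : forall j, (psi (Rhat j) <= M%:E)%E.
  move=> j; rewrite -(fineK (fj j)) lee_fin; apply: le_trans (ler_norm _) _.
  by rewrite /M (bigD1 j) //= lerDl sumr_ge0.
have fl : forall l, psi (avg_pred Rt Rhat l) \is a fin_num.
  move=> l; rewrite fin_numE -ltNye -ltey conj_gt //=.
  by apply: le_lt_trans (conj_avg_bound hpr (hO l) hM) _; rewrite ltry.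
apply: (argmin_shift ((\sum_l (Omega_l Rt l)%:R * fine (psi (avg_pred Rt Rhat l))
   - \sum_j fine (psi (Rhat j)))%R)) => r.
have eA : (\sum_j phi (Eexpand Rt r j) = \sum_l (Omega_l Rt l)%:R%:E * phi (r l))%E.
  rewrite (partition_big Rt predT) //=; apply: eq_bigr => l _.
  rewrite (eq_bigr (fun _ => phi (r l))); last by move=> j /eqP <-.
  by rewrite sum_const_condV mule_natl.
have eS : (\sum_j Eexpand Rt r j * Rhat j = \sum_l (Omega_l Rt l)%:R * (r l * avg_pred Rt Rhat l))%R.
  rewrite (partition_big Rt predT) //=; apply: eq_bigr => l _.
  rewrite (eq_bigr (fun j => r l * Rhat j)%R); last by move=> j /eqP <-.
  rewrite -mulr_sumr /avg_pred; field.
  by rewrite pnatr_eq0 -lt0n; exact: hO.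
rewrite (eq_bigr (fun l => (Omega_l Rt l)%:R%:E * phi (r l) +
   ((Omega_l Rt l)%:R * (fine (psi (avg_pred Rt Rhat l)) - r l * avg_pred Rt Rhat l))%:E)%E); last first.
  move=> l _; rewrite /Lphi -/psi -(fineK (fl l)) -addeA -EFinB muleDr //.
  exact: fin_num_adde_defl.
rewrite big_split /= sumEFin -eA /Lphi_vec -/psi.
have eP : (\sum_j psi (Rhat j) = (\sum_j fine (psi (Rhat j)))%:E)%E.
  by rewrite -sumEFin; apply: eq_bigr => j _; rewrite (fineK (fj j)).
rewrite eP eS -!addeA -EFinN -!EFinD; congr (_ + _%:E)%E.
rewrite (eq_bigr (fun i => (Omega_l Rt i)%:R * fine (psi (avg_pred Rt Rhat i)) - (Omega_l Rt i)%:R * (r i * avg_pred Rt Rhat i))%R); last by move=> i _; rewrite mulrBr.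
rewrite sumrB; ring.
Qed.
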